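(* Let $n\ge2$ and let $\mathbb{A}=(A_{ij})_{i,j=1}^n$ be an operator matrix as in the context. Assume that for every permutation $\pi$ of $\{1,\ldots,n\}$, $\mathbb{A}(\pi)_k$ is closed for every $k\in\{2,\ldots,n\}$. Then $\sigma(\mathbb{A})\subset\bigcap_{k=1}^nS^*_k(\mathbb{A})$.
   Context: Let $X_1,\ldots,X_n$ be complex Banach spaces and $X=X_1\times\cdots\times X_n$ with norm $\|x\|=\sum_i\|x_i\|_{X_i}$. For $i,j$, $A_{ij}:\mathcal{D}(A_{ij})\subset X_j\to X_i$ are linear, $A_{ii}$ closed, and for $i\ne j$ $A_{ij}$ is relatively $A_{jj}$-bounded ($\mathcal{D}(A_{jj})\subset\mathcal{D}(A_{ij})$ and $\|A_{ij}x\|\le\alpha\|x\|+\beta\|A_{jj}x\|$ for some $\alpha,\beta\ge0$). $\mathbb{A}=(A_{ij})$ acts on $\mathcal{D}(A_{11})\times\cdots\times\mathcal{D}(A_{nn})$ by $(\mathbb{A}x)_i=\sum_jA_{ij}x_j$. For a permutation $\pi$, $\mathbb{A}(\pi):=(A_{\pi^{-1}(i),\pi^{-1}(j)})_{i,j=1}^n$ acts on $X_{\pi^{-1}(1)}\times\cdots\times X_{\pi^{-1}(n)}$ with domain $\prod_i\mathcal{D}(A_{\pi^{-1}(i),\pi^{-1}(i)})$; $\mathbb{B}_k$ is the upper-left $k\times k$ block of such a matrix $\mathbb{B}$, with domain the product of the first $k$ diagonal domains. $\sigma(S)$ is the set of $\lambda$ for which $\lambda-S$ is not bijective from $\mathcal{D}(S)$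 with bounded inverse. For $j\ne k$ and $\lambda\notin\sigma(A_{kk})\cup\sigma(A_{jj})$ set \[ \mathcal{R}^*_{kj}(\lambda):=\sum_{i=1,i\ne k}^n\Big(\|A_{ik}(\lambda-A_{kk})^{-1}A_{kj}(\lambda-A_{jj})^{-1}\|+\|(1-\delta_{ij})A_{ij}(\lambda-A_{jj})^{-1}\|\Big), \] the modified Schur sets $S^*_{kj}(\mathbb{A}):=\sigma(A_{kk})\cup\sigma(A_{jj})\cup\{\lambda\notin\sigma(A_{kk})\cup\sigma(A_{jj}):\mathcal{R}^*_{kj}(\lambda)\ge1\}$, and $S^*_k(\mathbb{A}):=\bigcup_{j\ne k}S^*_{kj}(\mathbb{A})$. *)

(* Defs.v *)
From HB Require Import structures.
From mathcomp Require Import all_boot all_order all_algebra all_fingroup.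
From mathcomp Require Import all_classical all_reals all_analysis.
From mathcomp Require Export complex.
Import Order.TTheory GRing.Theory Num.Theory numFieldNormedType.Exports.



Unset Printing Implicit Defensive.

Local Open Scope classical_set_scope.
Local Open Scope ring_scope.

Section OperatorDefs.
Context {R : realType}.
Local Notation C := R[i].

(* real-valued norm (the C-valued norm `|x| is real; we take its real part) *)
Definition nrm {V : normedModType C} (x : V) : R := complex.Re `|x|.

Definition subspace {V : lmodType C} (D : set V) : Prop :=
  D 0 /\ forall (a : C) x y, D x -> D y -> D (a *: x + y).

Definition linear_on {U V : lmodType C} (D : set U) (T : U -> V) : Prop :=
  subspace D /\
  forall (a : C) x y, D x -> D y -> T (a *: x + y) = a *: T x + T y.

Definition closed_op {U V : normedModType C} (D : set U) (T : U -> V) : Prop :=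
  forall (u : nat -> U) (x : U) (y : V), (forall m, D (u m)) ->
    (fun m => nrm (u m - x)) @ \oo --> (0 : R) ->
    (fun m => nrm (T (u m) - y)) @ \oo --> (0 : R) ->
    D x /\ T x = y.

Definition rel_bounded {U V : normedModType C}
  (DS : set U) (S : U -> U) (DT : set U) (T : U -> V) : Prop :=
  DS `<=` DT /\ exists a b : R, 0 <= a /\ 0 <= b /\
    forall x, DS x -> nrm (T x) <= a * nrm x + b * nrm (S x).

Definition bdd_invertible {Z : Type} (nz : Z -> R) (Dom : set Z) (L : Z -> Z) : Prop :=
  exists Rv : Z -> Z,
    (forall y, Dom (Rv y) /\ L (Rv y) = y) /\
    (forall x, Dom x -> Rv (L x) = x) /\
    exists c : R, forall y, nz (Rv y) <= c * nz y.

Definition spectrum {V : normedModType C} (D : set V) (T : V -> V) : set C :=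
  [set l | ~ bdd_invertible (@nrm V) D (fun x => l *: x - T x)].

Definition is_resolvent {V : normedModType C} (D : set V) (T : V -> V)
  (l : C) (Rv : V -> V) : Prop :=
  (forall y, D (Rv y) /\ l *: Rv y - T (Rv y) = y) /\
  (forall x, D x -> Rv (l *: x - T x) = x).

Section Matrix.
Context {I : finType} (Y : I -> normedModType C).

Definition mdom (Dom : forall i, set (Y i)) : set (forall i, Y i) :=
  fun x => forall i, Dom i (x i).

Definition mapply (B : forall i j, Y j -> Y i) (x : forall i, Y i) : forall i, Y i :=
  fun i => \sum_(j : I) B i j (x j).

Definition mnorm (x : forall i, Y i) : R := \sum_(i : I) nrm (x i).

Definition mclosed (Dom : forall i, set (Y i)) (B : forall i j, Y j -> Y i) : Prop :=
  forall (u : nat -> forall i, Y i) (x y : forall i, Y i),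
    (forall m, mdom Dom (u m)) ->
    (fun m => mnorm (fun i => u m i - x i)) @ \oo --> (0 : R) ->
    (fun m => mnorm (fun i => mapply B (u m) i - y i)) @ \oo --> (0 : R) ->
    mdom Dom x /\ mapply B x = y.

Definition mspectrum (Dom : forall i, set (Y i)) (B : forall i j, Y j -> Y i) : set C :=
  [set l | ~ bdd_invertible mnorm (mdom Dom)
              (fun x i => l *: x i - mapply B x i)].
End Matrix.

Definition opnorm {U V : normedModType C} (T : U -> V) : \bar R :=
  ereal_sup [set (nrm (T x))%:E | x in [set x : U | nrm x <= 1]].

Section Schur.
Context {n : nat} (X : 'I_n -> normedModType C)
  (A : forall i j : 'I_n, X j -> X i) (D : forall i j : 'I_n, set (X j)).

(* R^*_{kj}(l), given the resolvents Rk = (l - A_kk)^{-1}, Rj = (l - A_jj)^{-1} *)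
Definition Rstar (k j : 'I_n) (Rk : X k -> X k) (Rj : X j -> X j) : \bar R :=
  (\sum_(i < n | i != k)
     (opnorm (fun x : X j => A i k (Rk (A k j (Rj x)))) +
      (if i == j then 0%E else opnorm (fun x : X j => A i j (Rj x)))))%E.

Definition Sstar_kj (k j : 'I_n) : set C :=
  [set l | spectrum (D k k) (A k k) l \/ spectrum (D j j) (A j j) l \/
     (~ spectrum (D k k) (A k k) l /\ ~ spectrum (D j j) (A j j) l /\
      exists (Rk : X k -> X k) (Rj : X j -> X j),
        is_resolvent (D k k) (A k k) l Rk /\ is_resolvent (D j j) (A j j) l Rj /\
        (1 <= Rstar k j Rk Rj)%E)].

Definition Sstar_k (k : 'I_n) : set C :=
  [set l | exists j : 'I_n, j != k /\ Sstar_kj k j l].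
End Schur.

End OperatorDefs.

(* Main.v *)
Require Import Defs.
From HB Require Import structures.
From mathcomp Require Import all_boot all_order all_algebra all_fingroup.
From mathcomp Require Import all_classical all_reals all_analysis.
From mathcomp Require Import complex.
From mathcomp.algebra_tactics Require Import ring lra.
Import Order.TTheory GRing.Theory Num.Theory numFieldNormedType.Exports.
Local Open Scope classical_set_scope.
Local Open Scope ring_scope.
Local Open Scope complex_scope.
Section Nrm.
Context {R : realType} {V : normedModType R[i]}.
Lemma normE (x : V) : `|x| = (nrm x)%:C.
Proof. by rewrite /nrm RRe_real. Qed.
Lemma nrm_ge0 (x : V) : 0 <= nrm x.
Proof. by have := normr_ge0 x; rewrite normE lecE => /andP[]. Qed.
Lemma nrmD (x y : V) : nrm (x + y) <= nrm x + nrm y.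
Proof. by rewrite -lecR rmorphD /= -!normE ler_normD. Qed.
Lemma nrmN (x : V) : nrm (- x) = nrm x.
Proof. by rewrite /nrm normrN. Qed.
Lemma nrmB (x y : V) : nrm (x - y) = nrm (y - x).
Proof. by rewrite /nrm distrC. Qed.
Lemma nrm0 : nrm (0 : V) = 0.
Proof. by rewrite /nrm normr0. Qed.
Lemma nrm_eq0 (x : V) : nrm x = 0 -> x = 0.
Proof. by move=> h; apply/normr0_eq0; rewrite normE h. Qed.
Lemma normC_real (a : R) : `|a%:C| = `|a|%:C.
Proof. by rewrite normc_def /= expr0n addr0 sqrtr_sqr. Qed.
Lemma nrmZr (a : R) (x : V) : nrm (a%:C *: x) = `|a| * nrm x.
Proof. by apply: complexI; rewrite rmorphM /= -!normE normrZ normC_real. Qed.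
Lemma nrmZ (a : R[i]) (x : V) : nrm (a *: x) = (complex.Re `|a| * nrm x)%R.
Proof. by rewrite {1}/nrm normrZ (normE x) -(RRe_real (normr_real a)) -rmorphM. Qed.
End Nrm.

Lemma cauchy_nrm {R : realType} {V : completeNormedModType R[i]} (u : nat -> V) :
  (forall e : R, 0 < e -> exists N, forall m p, (N <= m)%N -> (N <= p)%N -> nrm (u m - u p) < e) ->
  exists L, forall e : R, 0 < e -> exists N, forall m, (N <= m)%N -> nrm (u m - L) < e.
Proof.
move=> H.
have cu : cauchy (u @ \oo).
  apply/cauchyP => eps eps0.
  have [He Re0] : complex.Im eps = 0 /\ 0 < complex.Re eps.
    by move: eps0; rewrite ltcE /= => /andP[/eqP -> ->].
  have [N HN] := H _ Re0.
  exists (u N); exists N => // m /= Nm.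
  rewrite -ball_normE /= normE ltcE /= He eqxx /=.
  exact: HN.
have HL : u @ \oo --> lim (u @ \oo) by apply: cauchy_cvg.
move: HL; set L := (X in _ --> X) => HL.
exists L => e e0.
have e0' : 0 < e%:C by rewrite ltcR.
have [N _ HN] := (proj1 (cvgrPdist_lt _ _) HL) _ e0'.
exists N => m Nm; have := HN m Nm; rewrite normE ltcR nrmB //.
Qed.


Lemma pow_small {R : realType} {q : R} : 0 <= q < 1 ->
  forall e : R, 0 < e -> exists N, forall m, (N <= m)%N -> q ^+ m < e.
Proof.
move=> /andP[q0 q1] e e0.
have hq : `|q| < 1 by rewrite ger0_norm.
have := cvg_expr hq.
move=> /(proj1 (cvgrPdist_lt _ _)) /(_ e e0) [N _ HN].
exists N => m Nm; have := HN m Nm; rewrite sub0r normrN ger0_norm //.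
exact: exprn_ge0.
Qed.

Section Prod.
Context {R : realType} {I : finType} (Y : I -> completeNormedModType R[i]).
Local Notation V := (forall i, Y i).
Local Notation mn := (@mnorm R I Y).

Lemma mnorm_ge0 (x : V) : 0 <= mn x.
Proof. by apply: sumr_ge0 => i _; exact: nrm_ge0. Qed.

Lemma nrm_le_mnorm (x : V) i : nrm (x i) <= mn x.
Proof.
rewrite /mnorm (bigD1 i) //= lerDl; apply: sumr_ge0 => j _; exact: nrm_ge0.
Qed.

Lemma mnorm_tri (a b c : V) :
  mn (fun i => a i - c i) <= mn (fun i => a i - b i) + mn (fun i => b i - c i).
Proof.
rewrite /mnorm -big_split /=; apply: ler_sum => i _.
by apply: le_trans (nrmD _ _); rewrite addrA subrK.
Qed.

Lemma mnormB (a b : V) : mn (fun i => a i - b i) = mn (fun i => b i - a i).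
Proof. by apply: eq_bigr => i _; rewrite nrmB. Qed.

Lemma mnorm_eq0 (a b : V) : mn (fun i => a i - b i) = 0 -> a = b.
Proof.
move=> /eqP; rewrite psumr_eq0; last by move=> i _; exact: nrm_ge0.
move=> /allP H; apply: functional_extensionality_dep => i.
have /eqP/nrm_eq0/eqP := H i (mem_index_enum i).
by rewrite subr_eq0 => /eqP.
Qed.

Lemma mnorm_le_card (x : V) (c : R) : (forall i, nrm (x i) <= c) -> mn x <= #|I|%:R * c.
Proof.
move=> H; apply: le_trans (_ : \sum_(i : I) c <= _).
  by apply: ler_sum => i _.
by rewrite sumr_const mulr_natl.
Qed.

Lemma banach_fix (G : V -> V) (q : R) : 0 <= q < 1 ->
  (forall z w, mn (fun i => G z i - G w i) <= q * mn (fun i => z i - w i)) ->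
  exists z, G z = z.
Proof.
move=> /andP[q0 q1] HG.
pose u m := iter m G (fun i => 0).
pose d0 := mn (fun i => u 1%N i - u 0%N i).
have d00 : 0 <= d0 by exact: mnorm_ge0.
have h1 : forall m, mn (fun i => u m.+1 i - u m i) <= q ^+ m * d0.
  elim=> [|m IH]; first by rewrite expr0 mul1r.
  apply: le_trans (HG _ _) _.
  by rewrite exprS -mulrA ler_wpM2l.
have q1' : 0 < 1 - q by rewrite subr_gt0.
pose c := d0 / (1 - q).
have c0 : 0 <= c by rewrite divr_ge0 // ltW.
have h2 : forall m k, mn (fun i => u (m + k)%N i - u m i) <= c * (q ^+ m - q ^+ (m + k)).
  move=> m; elim=> [|k IH].
    rewrite addn0 subrr mulr0.
    by rewrite /mnorm big1 // => i _; rewrite subrr nrm0.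
  apply: le_trans (mnorm_tri _ (u (m + k)%N) _) _.
  rewrite addnS; apply: le_trans (lerD (h1 _) IH) _.
  rewrite le_eqVlt; apply/orP; left; apply/eqP.
  rewrite /c exprS; field; by rewrite lt0r_neq0.
have h2' : forall m p, (m <= p)%N -> mn (fun i => u p i - u m i) <= c * q ^+ m.
  move=> m p /subnKC <-; apply: le_trans (h2 _ _) _.
  by rewrite ler_wpM2l // lerBlDr lerDl exprn_ge0.
have h3 : forall i, forall e : R, 0 < e -> exists N, forall m p, (N <= m)%N -> (N <= p)%N ->
    nrm (u m i - u p i) < e.
  move=> i e e0.
  have e1 : 0 < e / (c + 1) by rewrite divr_gt0 // ltr_wpDl.
  have [N HN] := pow_small (ltac:(by rewrite q0 q1) : 0 <= q < 1) _ e1.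
  exists N => m p Nm Np.
  have key : forall m p, (N <= m)%N -> (m <= p)%N -> nrm (u p i - u m i) < e.
    move=> m' p' Nm' mp'.
    apply: le_lt_trans (nrm_le_mnorm (fun i => u p' i - u m' i) i) _.
    apply: le_lt_trans (h2' _ _ mp') _.
    have := HN _ Nm'; rewrite ltr_pdivlMr ?ltr_wpDl // => H.
    apply: le_lt_trans H.
    by rewrite mulrC ler_wpM2l ?exprn_ge0 // lerDl.
  case: (leqP m p) => mp; first by rewrite nrmB; apply: key.
  by apply: key => //; apply: ltnW.
pose L : V := fun i => projT1 (cid (cauchy_nrm (fun m => u m i) (h3 i))).
have hL : forall i e, 0 < e -> exists N, forall m, (N <= m)%N -> nrm (u m i - L i) < e.
  by move=> i; exact: (projT2 (cid (cauchy_nrm (fun m => u m i) (h3 i)))).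
have h4 : forall m i, nrm (u m i - L i) <= c * q ^+ m.
  move=> m i; apply/ler_addgt0Pr => e e0.
  have [N HN] := hL i e e0.
  have Hp := HN (maxn m N) (leq_maxr _ _).
  have := nrmD (u m i - u (maxn m N) i) (u (maxn m N) i - L i).
  rewrite addrA subrK => H; apply: le_trans H _; apply: lerD; last exact: ltW.
  rewrite nrmB; apply: le_trans (nrm_le_mnorm (fun i => u (maxn m N) i - u m i) i) _.
  exact: h2' (leq_maxl _ _).
have h5 : forall m, mn (fun i => L i - G L i) <= (#|I|%:R * c * 2) * q ^+ m.
  move=> m.
  apply: le_trans (mnorm_tri _ (u m.+1) _) _.
  have -> : (fun i => u m.+1 i - G L i) = (fun i => G (u m) i - G L i) by [].
  apply: le_trans (lerD (lexx _) (HG _ _)) _.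
  have a1 : mn (fun i => L i - u m.+1 i) <= #|I|%:R * (c * q ^+ m).
    apply: mnorm_le_card => i; rewrite nrmB; apply: le_trans (h4 _ _) _.
    by rewrite ler_wpM2l // exprS ler_piMl ?exprn_ge0 // ltW.
  have a2 : q * mn (fun i => u m i - L i) <= #|I|%:R * (c * q ^+ m).
    apply: le_trans (_ : mn (fun i => u m i - L i) <= _).
      by rewrite ler_piMl ?mnorm_ge0 // ltW.
    by apply: mnorm_le_card => i; apply: h4.
  apply: le_trans (lerD a1 a2) _.
  by rewrite le_eqVlt; apply/orP; left; apply/eqP; ring.
exists L; symmetry; apply: mnorm_eq0; apply/eqP; rewrite eq_le mnorm_ge0 andbT.
apply/ler_addgt0Pr => e e0; rewrite add0r.
pose K := #|I|%:R * c * 2 + 1.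
have K0 : 0 < K.
  have := mulr_ge0 (mulr_ge0 (ler0n R #|I|) c0) (ler0n R 2); rewrite /K; lra.
have [N HN] := pow_small (ltac:(by rewrite q0 q1) : 0 <= q < 1) _ (divr_gt0 e0 K0).
apply: le_trans (h5 N) _.
have := HN N (leqnn N); rewrite ltr_pdivlMr // => H.
apply: le_trans (ltW H).
by rewrite mulrC ler_wpM2l ?exprn_ge0 // /K lerDl.
Qed.
End Prod.

Section Lin.
Context {R : realType}.
Definition lin {U V : lmodType R[i]} (T : U -> V) :=
  forall (a : R[i]) x y, T (a *: x + y) = a *: T x + T y.

Context {U V : normedModType R[i]} (T : U -> V) (HT : lin T).
Lemma lin0 : T 0 = 0.
Proof. have h := HT 1 0 0; rewrite !scale1r addr0 in h; by apply: (addrI (T 0)); rewrite addr0 -h. Qed.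
Lemma linZ a x : T (a *: x) = a *: T x.
Proof. by rewrite -[a *: x]addr0 HT lin0 addr0. Qed.
Lemma linD x y : T (x + y) = T x + T y.
Proof. by have := HT 1 x y; rewrite !scale1r. Qed.
Lemma linN x : T (- x) = - T x.
Proof. by rewrite -scaleN1r linZ scaleN1r. Qed.
Lemma linB x y : T (x - y) = T x - T y.
Proof. by rewrite linD linN. Qed.
Lemma linS (J : Type) (s : seq J) (P : pred J) (F : J -> U) :
  T (\sum_(j <- s | P j) F j) = \sum_(j <- s | P j) T (F j).
Proof. exact: (big_morph _ linD lin0). Qed.

Lemma opnorm_ge0 : (0 <= opnorm T)%E.
Proof.
apply: (@le_trans _ _ ((nrm (T 0))%:E)); first by rewrite lin0 nrm0.
by apply: ereal_sup_ubound; exists 0 => //; rewrite /= nrm0 ler01.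
Qed.

Lemma opnorm_bound v : ((nrm (T v))%:E <= opnorm T * (nrm v)%:E)%E.
Proof.
have [v0|vn0] := eqVneq (nrm v) 0.
  by rewrite v0 mule0 (nrm_eq0 v v0) lin0 nrm0.
have r0 : 0 < nrm v by rewrite lt0r vn0 nrm_ge0.
pose w := ((nrm v)^-1)%:C *: v.
have hw : nrm w = 1 by rewrite /w nrmZr ger0_norm ?invr_ge0 ?nrm_ge0 // mulVf.
have hTw : nrm (T w) = (nrm v)^-1 * nrm (T v).
  by rewrite /w linZ nrmZr ger0_norm // invr_ge0 nrm_ge0.
have ub : ((nrm (T w))%:E <= opnorm T)%E.
  by apply: ereal_sup_ubound; exists w => //=; rewrite hw.
have -> : nrm (T v) = nrm v * nrm (T w) by rewrite hTw mulrA mulfV // mul1r.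
rewrite EFinM [X in (_ <= X)%E]muleC.
by apply: lee_wpmul2l => //; rewrite lee_fin nrm_ge0.
Qed.
End Lin.
Arguments lin0 {R U V T}. Arguments linZ {R U V T}. Arguments linD {R U V T}.
Arguments linN {R U V T}. Arguments linB {R U V T}. Arguments linS {R U V T}.
Arguments opnorm_ge0 {R U V T}. Arguments opnorm_bound {R U V T}.

Lemma le_sum_entry {R : realType} {I : finType} (f : I -> R) :
  (forall i, 0 <= f i) -> forall i, f i <= \sum_i f i.
Proof. by move=> H i; rewrite (bigD1 i) //= lerDl sumr_ge0. Qed.

Lemma fin_of_sum {R : realType} {I : finType} (P : pred I) (f : I -> \bar R) :
  (forall i, P i -> 0 <= f i)%E -> (\sum_(i | P i) f i < 1)%E ->
  forall i, P i -> f i \is a fin_num.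
Proof.
move=> H0 H1 i Pi; rewrite ge0_fin_numE ?H0 //.
apply: (@le_lt_trans _ _ 1%E); last by rewrite ltey.
apply: ltW; apply: le_lt_trans H1; rewrite (bigD1 i) //=.
by apply: leeDl; apply: sume_ge0 => j /andP[Pj _]; apply: H0.
Qed.

Lemma grp0 (V : zmodType) (a s t : V) : (a + s) - (a + t) = s - t.
Proof. by rewrite [a + s]addrC addrKA. Qed.
Lemma grp1 (V : zmodType) (a b p q : V) : a - (b - p) - (p + q) = a - (b + q).
Proof. by rewrite opprB opprD !addrA [a + p - b - p]addrAC addrK opprD addrA. Qed.
Lemma grp2 (V : zmodType) (a b s : V) : a + b + s - b - s = a.
Proof. by rewrite [a + b + s - b]addrAC addrK addrK. Qed.
Lemma grp3 (V : zmodType) (a b s : V) : a - b - s + b + s = a.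
Proof. by rewrite [a - b - s + b]addrAC subrK subrK. Qed.

Lemma nrm_sum {R : realType} {V : normedModType R[i]} {I : finType} (P : pred I) (F : I -> V) :
  nrm (\sum_(j | P j) F j) <= \sum_(j | P j) nrm (F j).
Proof.
apply: (big_ind2 (fun a b => nrm a <= b)); first by rewrite nrm0.
  by move=> a1 b1 a2 b2 h1 h2; apply: le_trans (nrmD _ _) _; apply: lerD.
by [].
Qed.

Lemma sum_sub_le {R : realType} {I : finType} (P : pred I) (f : I -> R) :
  (forall j, 0 <= f j) -> \sum_(j | P j) f j <= \sum_j f j.
Proof.
move=> H; rewrite [X in _ <= X](bigID P) /= lerDl; apply: sumr_ge0 => j _; exact: H.
Qed.

Lemma condsum {V : zmodType} {I : finType} (i k : I) (F : I -> V) :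
  \sum_(j | j != k) (if i == j then 0 else F j) = \sum_(j | (j != i) && (j != k)) F j.
Proof.
rewrite [LHS]big_mkcond [RHS]big_mkcond; apply: eq_bigr => j _.
by rewrite (eq_sym i j); case: (j == i); case: (j == k).
Qed.

Section Main.
Context {R : realType} {n : nat} (X : 'I_n -> completeNormedModType R[i])
 (A : forall i j : 'I_n, X j -> X i) (D : forall i j : 'I_n, set (X j)) (l : R[i]) (k : 'I_n)
 (Rs : forall j, X j -> X j)
 (Hlin : forall i j, linear_on (D i j) (A i j))
 (Hrb : forall i j, i != j -> rel_bounded (D j j) (A j j) (D i j) (A i j))
 (HR : forall j, is_resolvent (D j j) (A j j) l (Rs j))
 (HRb : forall j, exists c : R, forall y, nrm (Rs j y) <= c * nrm y)
 (Hq : forall j, j != k -> (Rstar X A k j (Rs k) (Rs j) < 1)%E).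

Definition K i j : X j -> X i := fun v => A i j (Rs j v).

Lemma Dsub i j : D j j `<=` D i j.
Proof. by case: (eqVneq i j) => [->|ij] //; case: (Hrb _ _ ij). Qed.
Lemma Rs_dom j y : D j j (Rs j y).
Proof. by case: (HR j) => H _; case: (H y). Qed.
Lemma Rs_eq j y : l *: Rs j y - A j j (Rs j y) = y.
Proof. by case: (HR j) => H _; case: (H y). Qed.
Lemma Rs_inv j x : D j j x -> Rs j (l *: x - A j j x) = x.
Proof. by case: (HR j) => _ H; apply: H. Qed.

Lemma lin_Rs j : lin (Rs j).
Proof.
move=> a x y.
have [[_ Dsp] HA] := Hlin j j.
set w := a *: Rs j x + Rs j y.
have Dw : D j j w by apply: Dsp; apply: Rs_dom.
have E : a *: x + y = l *: w - A j j w.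
  rewrite /w HA; try exact: Rs_dom.
  rewrite -{1}(Rs_eq j x) -{1}(Rs_eq j y).
  by rewrite !scalerDr !scalerN !scalerA [a * l]mulrC opprD addrACA.
by rewrite E Rs_inv.
Qed.

Lemma lin_K i j : lin (K i j).
Proof.
move=> a x y; rewrite /K lin_Rs (Hlin i j).2 //; apply: Dsub; exact: Rs_dom.
Qed.

Lemma Rs_bound : exists Cr : R, 0 <= Cr /\ forall j y, nrm (Rs j y) <= Cr * nrm y.
Proof.
pose c j := projT1 (cid (HRb j)).
have hc : forall j y, nrm (Rs j y) <= c j * nrm y := fun j => projT2 (cid (HRb j)).
exists (\sum_j `|c j|); split; first by apply: sumr_ge0.
move=> j y; apply: le_trans (hc j y) _; apply: ler_wpM2r; first exact: nrm_ge0.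
apply: le_trans (ler_norm _) _; exact: (le_sum_entry (fun j => `|c j|)).
Qed.

Lemma nl_ge0 : 0 <= complex.Re `|l|.
Proof. by have := normr_ge0 l; rewrite lecE => /andP[]. Qed.

Lemma K_bound : exists B : R, 0 <= B /\ forall i j, i != j -> forall v, nrm (K i j v) <= B * nrm v.
Proof.
have [Cr [Cr0 HCr]] := Rs_bound.
have Hex : forall ij : 'I_n * 'I_n, exists b : R, 0 <= b /\ (ij.1 != ij.2 -> forall v, nrm (K ij.1 ij.2 v) <= b * nrm v).
  case=> i j /=; case: (eqVneq i j) => [_|ij]; first by exists 0; split.
  have [_ [a [b [a0 [b0 Hab]]]]] := Hrb _ _ ij.
  exists (a * Cr + b * (complex.Re `|l| * Cr + 1)); split.
    by apply: addr_ge0; apply: mulr_ge0 => //; apply: addr_ge0 => //; apply: mulr_ge0 => //; exact: nl_ge0.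
  move=> _ v; rewrite /K; apply: le_trans (Hab _ (Rs_dom j v)) _.
  have eA : A j j (Rs j v) = l *: Rs j v - v by rewrite -{3}(Rs_eq j v) opprB addrC subrK.
  rewrite eA; apply: le_trans (lerD (ler_wpM2l a0 (HCr j v)) (ler_wpM2l b0 (nrmD _ _))) _.
  rewrite nrmN nrmZ.
  have h1 : complex.Re `|l| * nrm (Rs j v) <= complex.Re `|l| * (Cr * nrm v).
    by apply: ler_wpM2l; [exact: nl_ge0|exact: HCr].
  apply: le_trans (lerD (lexx _) (ler_wpM2l b0 (lerD h1 (lexx _)))) _.
  by rewrite le_eqVlt; apply/orP; left; apply/eqP; ring.
pose b ij := projT1 (cid (Hex ij)).
have hb : forall ij, 0 <= b ij /\ (ij.1 != ij.2 -> forall v, nrm (K ij.1 ij.2 v) <= b ij * nrm v).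
  by move=> ij; exact: (projT2 (cid (Hex ij))).
exists (\sum_ij b ij); split; first by apply: sumr_ge0 => ij _; case: (hb ij).
move=> i j ij v; have [_ H] := hb (i, j); apply: le_trans (H ij v) _.
apply: ler_wpM2r; first exact: nrm_ge0.
by apply: (le_sum_entry b) => ij'; case: (hb ij').
Qed.

Definition Lm i j (v : X j) : X i := K i k (K k j v) + (if i == j then 0 else K i j v).

Lemma lin_Lm i j : lin (Lm i j).
Proof.
move=> a x y; rewrite /Lm !(lin_K).
case: (i == j); last by rewrite scalerDr addrACA.
by rewrite !addr0.
Qed.

Lemma nrm_Lm i j v : nrm (Lm i j v) <= nrm (K i k (K k j v)) + (if i == j then 0 else nrm (K i j v)).
Proof. by apply: le_trans (nrmD _ _) _; case: (i == j); rewrite ?nrm0. Qed.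

Lemma lin_KK i j : lin (fun x : X j => K i k (K k j x)).
Proof. by move=> a x y; rewrite lin_K (lin_K i k). Qed.

Lemma q_bound : exists q : R, 0 <= q < 1 /\
  forall j, j != k -> forall v, \sum_(i | i != k) nrm (Lm i j v) <= q * nrm v.
Proof.
have Hj : forall j, exists qj : R, 0 <= qj < 1 /\
    (j != k -> forall v, \sum_(i | i != k) nrm (Lm i j v) <= qj * nrm v).
  move=> j; case: (eqVneq j k) => [_|jk]; first by exists 0; rewrite lexx ltr01.
  pose s i := (opnorm (fun x : X j => K i k (K k j x)) +
              (if i == j then 0%E else opnorm (K i j)))%E.
  have Hs : Rstar X A k j (Rs k) (Rs j) = \sum_(i | i != k) s i by [].
  have s0 : forall i, (0 <= s i)%E.
    move=> i; apply: adde_ge0; first exact: opnorm_ge0 (lin_KK i j).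
    by case: (i == j) => //; exact: opnorm_ge0 (lin_K i j).
  have hlt := Hq _ jk; rewrite Hs in hlt.
  have fin : forall i, i != k -> s i \is a fin_num.
    by apply: fin_of_sum => // i _; exact: s0.
  exists (\sum_(i | i != k) fine (s i)); split.
    apply/andP; split; first by apply: sumr_ge0 => i _; apply: fine_ge0.
    rewrite -lte_fin -sumEFin (eq_bigr s) // => i ik; exact: fineK (fin i ik).
  move=> _ v; rewrite mulr_suml; apply: ler_sum => i ik.
  apply: le_trans (nrm_Lm i j v) _.
  rewrite -lee_fin EFinM (fineK (fin i ik)) EFinD /s ge0_muleDl //;
    last by case: (i == j) => //; exact: opnorm_ge0 (lin_K i j).
    2: exact: opnorm_ge0 (lin_KK i j).
  apply: leeD; first exact: opnorm_bound (lin_KK i j) v.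
  by case: (i == j) => /=; [rewrite mul0e | exact: opnorm_bound (lin_K i j) v].
pose qf j := projT1 (cid (Hj j)).
have hqf : forall j, 0 <= qf j < 1 /\ (j != k -> forall v, \sum_(i | i != k) nrm (Lm i j v) <= qf j * nrm v).
  by move=> j; exact: (projT2 (cid (Hj j))).
exists (\big[Num.max/0]_j qf j); split.
  apply: (big_ind (fun x => 0 <= x < 1)); first by rewrite lexx ltr01.
    move=> x y /andP[x0 x1] /andP[y0 y1]; by rewrite le_max x0 /= gt_max x1 y1.
  by move=> j _; case: (hqf j).
move=> j jk v; have [_ H] := hqf j; apply: le_trans (H jk v) _.
apply: ler_wpM2r; first exact: nrm_ge0.
by rewrite (bigD1 j) //= le_max lexx.
Qed.

Lemma TA (v : forall i, X i) i :
  l *: Rs i (v i) - mapply X A (fun j => Rs j (v j)) i = v i - \sum_(j | j != i) K i j (v j).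
Proof. by rewrite /mapply (bigD1 i) //= opprD addrA Rs_eq. Qed.

Lemma IdI (v : forall i, X i) i : i != k ->
  v i - \sum_(j | j != i) K i j (v j) =
  v i - K i k (v k - \sum_(j | j != k) K k j (v j)) - \sum_(j | j != k) Lm i j (v j).
Proof.
move=> ik.
rewrite [in LHS](bigD1 k) /=; last by rewrite eq_sym.
rewrite (linB (lin_K i k)) (linS (lin_K i k)) /Lm big_split /= grp1 condsum.
by [].
Qed.

Lemma main_inv : bdd_invertible (mnorm X) (mdom X (fun i => D i i))
  (fun x i => l *: x i - mapply X A x i).
Proof.
have [q [/andP[q0 q1] Hqb]] := q_bound.
have [B [B0 HB]] := K_bound.
have [Cr [Cr0 HCr]] := Rs_bound.
pose G (y z : forall i, X i) : forall i, X i := fun i =>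
  if i == k then 0 else y i + K i k (y k) + \sum_(j | j != k) Lm i j (z j).
have Gc : forall y z w, mnorm X (fun i => G y z i - G y w i) <= q * mnorm X (fun i => z i - w i).
  move=> y z w.
  rewrite {1}/mnorm (bigD1 k) //= /G eqxx subrr nrm0 add0r.
  apply: (@le_trans _ _ (\sum_(i | i != k) \sum_(j | j != k) nrm (Lm i j (z j - w j)))).
    apply: ler_sum => i ik; rewrite (negbTE ik) grp0 -sumrB.
    apply: le_trans (nrm_sum _ _) _; apply: ler_sum => j _.
    by rewrite (linB (lin_Lm i j)).
  rewrite exchange_big /=.
  apply: (@le_trans _ _ (\sum_(j | j != k) q * nrm (z j - w j))).
    by apply: ler_sum => j jk; apply: Hqb.
  rewrite -mulr_sumr ler_wpM2l //; apply: sum_sub_le => j; exact: nrm_ge0.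
have Hfix : forall y, exists z, G y z = z.
  move=> y; apply: (@banach_fix R 'I_n X (G y) q); [by rewrite q0 q1 | exact: Gc].
pose zs y := projT1 (cid (Hfix y)).
have hzs : forall y, G y (zs y) = zs y := fun y => projT2 (cid (Hfix y)).
pose zk y := y k + \sum_(j | j != k) K k j (zs y j).
pose zf y := eqtype.dfwith (zs y) (zk y).
have zf_k : forall y, zf y k = zk y by move=> y; rewrite /zf dfwith_in.
have zf_o : forall y j, j != k -> zf y j = zs y j.
  by move=> y j jk; rewrite /zf dfwith_out // eq_sym.
have Tzf : forall y, zf y k - \sum_(j | j != k) K k j (zf y j) = y k.
  move=> y; rewrite zf_k (eq_bigr (fun j => K k j (zs y j))); first by rewrite /zk addrK.
  by move=> j jk; rewrite zf_o.
exists (fun y i => Rs i (zf y i)); split; [|split].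
- move=> y; split; first by move=> i; exact: Rs_dom.
  apply: functional_extensionality_dep => i; rewrite TA.
  case: (eqVneq i k) => [->|ik]; first exact: Tzf.
  rewrite IdI // Tzf zf_o //.
  rewrite (eq_bigr (fun j => Lm i j (zs y j))); last by move=> j jk; rewrite zf_o.
  have := hzs y; move=> /(congr1 (fun f => f i)); rewrite {1}/G (negbTE ik) => <-.
  exact: grp2.
- move=> x Dx /=.
  set y := (fun i => l *: x i - mapply X A x i).
  pose zx j := l *: x j - A j j (x j).
  have ex : (fun j => Rs j (zx j)) = x.
    by apply: functional_extensionality_dep => j; rewrite Rs_inv //; apply: Dx.
  have yE : forall i, y i = zx i - \sum_(j | j != i) K i j (zx j).
    by move=> i; rewrite /y -ex /= TA.
  pose w := fun i => if i == k then 0 else zx i.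
  have Tzx : zx k - \sum_(j | j != k) K k j (zx j) = y k by rewrite yE.
  have Gw : G y w = w.
    apply: functional_extensionality_dep => i; rewrite /G /w.
    case: (eqVneq i k) => [->|ik]; first by [].
    under eq_bigr => j jk do rewrite (negbTE jk).
    rewrite yE (IdI zx) // Tzx.
    exact: grp3.
  have wz : w = zs y.
    apply: (mnorm_eq0 X); apply/eqP; rewrite eq_le mnorm_ge0 andbT.
    have := Gc y w (zs y); rewrite Gw hzs => H.
    have : (1 - q) * mnorm X (fun i => w i - zs y i) <= 0 by rewrite mulrBl mul1r subr_le0.
    by rewrite pmulr_rle0 // subr_gt0.
  apply: functional_extensionality_dep => i.
  case: (eqVneq i k) => [->|ik].
    rewrite zf_k /zk -wz (eq_bigr (fun j => K k j (zx j))); last first.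
      by move=> j jk; rewrite /w (negbTE jk).
    by rewrite -Tzx subrK Rs_inv //; apply: Dx.
  by rewrite zf_o // -wz /w (negbTE ik) Rs_inv //; apply: Dx.
- pose M0 := 1 + #|'I_n|%:R * B.
  have M00 : 0 <= M0 by rewrite /M0 addr_ge0 // mulr_ge0.
  pose M1 := M0 / (1 - q).
  have q1' : 0 < 1 - q by rewrite subr_gt0.
  have M10 : 0 <= M1 by rewrite /M1 divr_ge0 // ltW.
  exists (Cr * (1 + B * M1 + M1)) => y.
  have hG0 : mnorm X (G y (fun i => 0)) <= M0 * mnorm X y.
    apply: (@le_trans _ _ (\sum_(i : 'I_n) (nrm (y i) + B * mnorm X y))).
      apply: ler_sum => i _; rewrite /G.
      case: (eqVneq i k) => [->|ik].
        by rewrite nrm0 addr_ge0 ?nrm_ge0 // mulr_ge0 // mnorm_ge0.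
      rewrite big1; last by move=> j _; exact: (lin0 (lin_Lm i j)).
      rewrite addr0; apply: le_trans (nrmD _ _) _; apply: lerD => //.
      apply: le_trans (HB _ _ ik _) _; rewrite ler_wpM2l //; exact: nrm_le_mnorm.
    rewrite big_split /= sumr_const -mulr_natl /M0 /mnorm.
    by rewrite le_eqVlt; apply/orP; left; apply/eqP; ring.
  have hz : mnorm X (zs y) <= M1 * mnorm X y.
    have t := mnorm_tri X (zs y) (G y (fun i => 0)) (fun i => 0).
    have c1 := Gc y (zs y) (fun i => 0); rewrite hzs in c1.
    have e0 : forall a : forall i, X i, mnorm X (fun i => a i - 0) = mnorm X a.
      by move=> a; apply: eq_bigr => i _; rewrite subr0.
    rewrite /= !e0 in t c1.
    have h : mnorm X (zs y) <= q * mnorm X (zs y) + M0 * mnorm X y.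
      apply: le_trans t _; apply: lerD => //.
    rewrite /M1 mulrAC ler_pdivlMr //.
    have := mnorm_ge0 X (zs y); have := mnorm_ge0 X y.
    move: h; set a := mnorm X (zs y); set b := mnorm X y => h a0 b0.
    nra.
  have hzk : nrm (zk y) <= mnorm X y + B * mnorm X (zs y).
    rewrite /zk; apply: le_trans (nrmD _ _) _; apply: lerD; first exact: nrm_le_mnorm.
    apply: le_trans (nrm_sum _ _) _.
    apply: (@le_trans _ _ (\sum_(j | j != k) B * nrm (zs y j))).
      by apply: ler_sum => j jk; apply: HB; rewrite eq_sym.
    rewrite -mulr_sumr ler_wpM2l //; apply: sum_sub_le => j; exact: nrm_ge0.
  apply: (@le_trans _ _ (Cr * \sum_i nrm (zf y i))).
    rewrite /mnorm mulr_sumr; apply: ler_sum => i _; exact: HCr.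
  rewrite -mulrA ler_wpM2l //.
  rewrite (bigD1 k) //= zf_k.
  rewrite (eq_bigr (fun i => nrm (zs y i))); last by move=> i ik; rewrite zf_o.
  have hs : \sum_(i | i != k) nrm (zs y i) <= mnorm X (zs y).
    by apply: sum_sub_le => i; exact: nrm_ge0.
  have := mnorm_ge0 X y; have := mnorm_ge0 X (zs y).
  move: hzk hz hs; set a := mnorm X (zs y); set b := mnorm X y.
  set c := nrm (zk y); set d := \sum_(i | i != k) _ => hzk hz hs a0 b0.
  nra.
Qed.
End Main.

Theorem theorem5p2 (R : realType) (n : nat)
  (X : 'I_n -> completeNormedModType R[i])
  (A : forall i j : 'I_n, X j -> X i) (D : forall i j : 'I_n, set (X j)) :
  (2 <= n)%N ->
  (forall i j, linear_on (D i j) (A i j)) ->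
  (forall i, closed_op (D i i) (A i i)) ->
  (forall i j, i != j -> rel_bounded (D j j) (A j j) (D i j) (A i j)) ->
  (forall (p : 'S_n) (k : nat) (Hk : (k <= n)%N), (2 <= k)%N ->
     mclosed (fun i : 'I_k => X ((p^-1)%g (widen_ord Hk i)))
       (fun i : 'I_k => D ((p^-1)%g (widen_ord Hk i)) ((p^-1)%g (widen_ord Hk i)))
       (fun i j : 'I_k => A ((p^-1)%g (widen_ord Hk i)) ((p^-1)%g (widen_ord Hk j)))) ->
  forall l : R[i], mspectrum X (fun i => D i i) A l ->
  forall k : 'I_n, Sstar_k X A D k l.
Proof.
move=> n2 Hlin Hcl Hrb Hmc l Hsp k.
apply: contrapT => nS.
have nSj : forall j, j != k -> ~ Sstar_kj X A D k j l.
  by move=> j jk H; apply: nS; exists j.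
have [j0 j0k] : exists j0 : 'I_n, j0 != k.
  have h : ((if (k : nat) == 0%N then 1 else 0) < n)%N.
    by case: (_ == _); apply: leq_trans n2.
  exists (Ordinal h); apply/eqP => /(congr1 val) /=.
  case: eqP => [k0|kn0]; first by rewrite k0.
  by move=> h'; apply: kn0; rewrite -h'.
have nspec : forall j, ~ spectrum (D j j) (A j j) l.
  move=> j; case: (eqVneq j k) => [->|jk].
    by move=> H; apply: (nSj j0 j0k); left.
  by move=> H; apply: (nSj j jk); right; left.
have bi : forall j, bdd_invertible nrm (D j j) (fun x => l *: x - A j j x).
  by move=> j; apply: contrapT; exact: nspec j.
pose Rs j := projT1 (cid (bi j)).
have hRs : forall j, (forall y, D j j (Rs j y) /\ l *: Rs j y - A j j (Rs j y) = y) /\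
    (forall x, D j j x -> Rs j (l *: x - A j j x) = x) /\
    exists c : R, forall y, nrm (Rs j y) <= c * nrm y.
  by move=> j; exact: (projT2 (cid (bi j))).
have HR : forall j, is_resolvent (D j j) (A j j) l (Rs j).
  by move=> j; have [h1 [h2 _]] := hRs j; split.
have HRb : forall j, exists c : R, forall y, nrm (Rs j y) <= c * nrm y.
  by move=> j; have [_ [_ h3]] := hRs j.
have Hq : forall j, j != k -> (Rstar X A k j (Rs k) (Rs j) < 1)%E.
  move=> j jk; rewrite ltNge; apply/negP => H; apply: (nSj j jk); right; right.
  split; first exact: nspec k.
  split; first exact: nspec j.
  by exists (Rs k), (Rs j); split; [exact: HR|split; [exact: HR|exact: H]].
apply: Hsp.
have M := (@main_inv R n X A D l k Rs Hlin Hrb HR HRb Hq).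
exact: M.
Qed.
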